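(* Let $\lambda=(\lambda_1,\dots,\lambda_m)$ be a Young diagram with $n$ boxes and let $l\ge 1$ be an integer. Then $$M_{\lambda,2l}\le n(\lambda_1-1)^l\lambda_1^{\,l-1}.$$
   Context: For a Young diagram $\lambda=(\lambda_1,\dots,\lambda_m)$ with $\lambda_1\ge\dots\ge\lambda_m\ge1$, $\sum\lambda_i=n$, and an integer $l\ge 0$, define $M_{\lambda,2l}=\sum_{j=1}^m\big\{(\lambda_j-j)^l(\lambda_j-j+1)^l-j^l(j-1)^l\big\}$. *)

(* Defs.v *)
From mathcomp Require Import all_boot all_order all_algebra.
Set Implicit Arguments. Unset Strict Implicit. Unset Printing Implicit Defensive.
Import Order.TTheory GRing.Theory Num.Theory.
Local Open Scope ring_scope.

Definition young (la : seq nat) : bool :=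
  sorted geq la && all (fun x => 0 < x)%N la.

(* M_{lambda,2l} = sum_{j=1}^m ((la_j - j)^l (la_j - j + 1)^l - j^l (j-1)^l),
   computed in int (la_j - j can be negative).  Index j (1-based) is i.+1
   for i : 'I_(size la), la_j = nth 0 la i. *)
Definition M (la : seq nat) (l : nat) : int :=
  \sum_(i < size la)
    (((nth 0%N la i)%:Z - (i.+1)%:Z) ^+ l * ((nth 0%N la i)%:Z - (i.+1)%:Z + 1) ^+ l
     - (i.+1)%:Z ^+ l * (i%:Z) ^+ l).

(* Main.v *)
Require Import Defs.
From mathcomp Require Import all_boot all_order all_algebra.
Import Order.TTheory GRing.Theory Num.Theory.
Local Open Scope ring_scope.

Lemma pX (m k : nat) : (m%:Z) ^+ k = ((m ^ k)%N)%:Z.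
Proof. by elim: k => [|k IH] //; rewrite exprS IH expnS PoszM. Qed.

Lemma expn_mono (m n e : nat) : (m <= n)%N -> (m ^ e <= n ^ e)%N.
Proof. by move=> h; elim: e => // e IH; rewrite !expnS leq_mul. Qed.

Lemma row_bound (p L i l : nat) : (0 < p)%N -> (p <= L)%N -> (1 <= l)%N ->
  (p%:Z - (i.+1)%:Z) ^+ l * (p%:Z - (i.+1)%:Z + 1) ^+ l - (i.+1)%:Z ^+ l * (i%:Z) ^+ l
  <= ((p * (L.-1) ^ l * L ^ l.-1)%N)%:Z.
Proof.
move=> p0 pL l1.
have Y0 : 0 <= (i.+1)%:Z ^+ l * (i%:Z) ^+ l by rewrite !pX -PoszM.
case: (ltnP i p) => h.
- apply: le_trans (_ : (p%:Z - (i.+1)%:Z) ^+ l * (p%:Z - (i.+1)%:Z + 1) ^+ l <= _).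
    by rewrite gerBl.
  have e1 : p%:Z - (i.+1)%:Z = (p - i.+1)%N by rewrite subzn.
  have e2 : ((p - i.+1)%N)%:Z + 1 = (p - i)%N.
    by rewrite -[1]/(1%N%:Z) -PoszD addn1 subnSK.
  rewrite e1 e2 !pX -PoszM lez_nat.
  have a1 : ((p - i.+1) ^ l <= (L.-1) ^ l)%N.
    rewrite leq_exp2r //; apply: (@leq_trans p.-1).
      by rewrite -subn1 leq_sub2l.
    by rewrite -!subn1 leq_sub2r.
  have a2 : ((p - i) ^ l <= p * L ^ l.-1)%N.
    apply: leq_trans (_ : p ^ l <= _)%N; first by rewrite leq_exp2r // leq_subr.
    by clear Y0; case: l l1 {a1} => // l _; rewrite expnS leq_mul2l expn_mono ?orbT.
  by rewrite [(p * _)%N]mulnC -mulnA leq_mul.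
- apply: le_trans (_ : 0 <= _); last by [].
  rewrite subr_le0.
  have e1 : p%:Z - (i.+1)%:Z = - ((i.+1 - p)%N)%:Z.
    by rewrite -subzn ?opprB // leqW.
  have e2 : p%:Z - (i.+1)%:Z + 1 = - ((i - p)%N)%:Z.
    by rewrite -(subzn h) opprB -addn1 PoszD opprD -addrA addrNK.
  rewrite e2 e1 -!exprMn mulrNN exprMn !pX -PoszM lez_nat.
  by rewrite -expnMn expn_mono // leq_mul // leq_subr.
Qed.

Lemma sum_nth (s : seq nat) :
  sumn s = (\sum_(i < size s) nth 0%N s i)%N.
Proof.
elim: s => [|x s IH] /=; first by rewrite big_ord0.
by rewrite big_ord_recl /= IH.
Qed.

Theorem lemma5p10 (la : seq nat) (n l : nat) :
  young la -> sumn la = n -> (1 <= l)%N ->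
  M la l <= n%:Z * ((head 0%N la)%:Z - 1) ^+ l * (head 0%N la)%:Z ^+ l.-1.
Proof.
case: la => [|x s] /=.
  by move=> _ <- _; rewrite /M big_ord0 mul0r mul0r.
move=> /andP [Hs /andP [x0 Hall]] <- l1.
have Hmin : all (geq x) (x :: s).
  by rewrite /= leqnn; apply: order_path_min Hs => a b c /= h1 h2; apply: leq_trans h2 h1.
have -> : x%:Z - 1 = (x.-1)%:Z by rewrite -subn1 subzn.
rewrite !pX -!PoszM.
rewrite -[(x + sumn s)%N]/(sumn (x :: s)) sum_nth big_distrl big_distrl /=.
rewrite (big_morph Posz PoszD (erefl _)) /M.
apply: ler_sum => i _.
have Hi : (nth 0%N (x :: s) i \in x :: s) by apply: mem_nth.
have pL : (nth 0%N (x :: s) i <= x)%N by move/allP: Hmin => /(_ _ Hi).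
have p0 : (0 < nth 0%N (x :: s) i)%N.
  by move: Hi; rewrite inE => /orP [/eqP -> //|]; move/allP: Hall => H /H.
exact: row_bound.
Qed.
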